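(* Let $G$ be a topological group. Then $L^0(G)$ is the closure of $\bigcup_{n\ge1}h_n(G^n)$.
   Context: Let $\lambda$ be Lebesgue measure on $[0,1]$. A map $f\colon [0,1]\to G$ is strongly $\lambda$-measurable if for every $\epsilon>0$ there is a closed $A\subseteq[0,1]$ with $\lambda([0,1]\setminus A)\le\epsilon$ and $f|_A$ continuous. $L^{0}(G)$ is the set of $\lambda$-a.e. equivalence classes of strongly $\lambda$-measurable maps $[0,1]\to G$, with pointwise group operations and the topology of convergence in measure: a neighbourhood basis of the identity consists of the sets $N(U,\epsilon)=\{f : \lambda(\{x: f(x)\notin U\})<\epsilon\}$, $U$ an open identity neighbourhood in $G$, $\epsilon>0$. For $n\ge1$, $h_n\colon G^n\to L^0(G)$ sends $(g_1,\dots,g_n)$ to the map which is constantly $g_i$ on $[(i-1)/n,i/n)$ for $i=1,\dots,n$. *)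

(* Defs.v *)
From HB Require Import structures.
From mathcomp Require Import all_boot all_order all_algebra.
From mathcomp Require Import all_classical all_reals all_analysis.
Set Implicit Arguments. Unset Strict Implicit. Unset Printing Implicit Defensive.
Import Order.TTheory GRing.Theory Num.Theory numFieldNormedType.Exports.
Local Open Scope classical_set_scope.
Local Open Scope ring_scope.

Definition I01 (R : realType) : set R := `[0, 1].

Definition topological_group (G : topologicalType)
  (mul : G -> G -> G) (inv : G -> G) (e : G) : Prop :=
  [/\ (forall x y z, mul x (mul y z) = mul (mul x y) z),
      (forall x, mul e x = x),
      (forall x, mul (inv x) x = e),
      continuous (fun p : G * G => mul p.1 p.2) &
      continuous inv].

(* Outer Lebesgue measure strictly below eps:  lambda^*(S) < eps. *)
Definition lam_lt (R : realType) (S : set R) (eps : R) : Prop :=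
  exists B : set R, [/\ measurable B, S `<=` B &
    (@lebesgue_measure R B < eps%:E)%E].

(* Strong lambda-measurability of f : [0,1] -> G (f given on all of R,
   only its values on [0,1] matter). *)
Definition strongly_measurable (R : realType) (G : topologicalType)
  (f : R -> G) : Prop :=
  forall eps : R, 0 < eps ->
    exists A : set R, [/\ closed A, A `<=` (@I01 R),
      (@lebesgue_measure R ((@I01 R) `\` A) <= eps%:E)%E &
      {within A, continuous f}].

(* h_{n+1} : G^(n+1) -> L^0(G): constantly g_i on [i/(n+1), (i+1)/(n+1))
   (0-based index i); at x = 1 it takes the value g_n. *)
Definition hstep (R : realType) (G : Type) (n : nat) (g : 'I_n.+1 -> G)
  : R -> G :=
  fun x => g (inord (minn (Num.truncn (x *+ n.+1)) n)).

(* [f] lies in the closure (in L^0(G), topology of convergence in measure)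
   of the set of classes of the maps in S: every basic neighbourhood
   [f] * N(U, eps) of [f] meets S. *)
Definition in_L0_closure (R : realType) (G : topologicalType)
  (mul : G -> G -> G) (inv : G -> G) (e : G)
  (S : set (R -> G)) (f : R -> G) : Prop :=
  forall U : set G, open U -> U e ->
  forall eps : R, 0 < eps ->
    exists s : R -> G, S s /\
      lam_lt [set x | (@I01 R) x /\ ~ U (mul (inv (f x)) (s x))] eps.

Definition step_maps (R : realType) (G : Type) : set (R -> G) :=
  [set s | exists (n : nat) (g : 'I_n.+1 -> G), s = @hstep R G n g].

(* Main.v *)
Require Import Defs.
From HB Require Import structures.
From mathcomp Require Import all_boot all_order all_algebra.
From mathcomp Require Import all_classical all_reals all_analysis.
From mathcomp Require Import lra ring measurable_realfun.
Set Implicit Arguments. Unset Strict Implicit. Unset Printing Implicit Defensive.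
Import Order.TTheory GRing.Theory Num.Theory numFieldNormedType.Exports.
Local Open Scope classical_set_scope.
Local Open Scope ring_scope.

Definition idx (R : realType) (n : nat) (x : R) : nat := minn (Num.truncn (x *+ n.+1)) n.

Lemma idx_le (R : realType) n (x : R) : (idx n x <= n)%N.
Proof. exact: geq_minr. Qed.

Lemma idx_bounds (R : realType) n (x : R) : 0 <= x <= 1 ->
  (idx n x)%:R <= x *+ n.+1 <= (idx n x)%:R + 1.
Proof.
move=> /andP[x0 x1].
have y0 : 0 <= x *+ n.+1 by rewrite mulrn_wge0.
have yN : x *+ n.+1 <= n.+1%:R by rewrite lerMn2r x1 orbT.
case/andP: (truncn_itv y0) => t1 t2.
rewrite /idx; set t := Num.truncn _ in t1 t2 *; case: (leqP t n) => h.
  by rewrite t1 /= natr1 ltW.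
apply/andP; split.
  by apply: le_trans t1; rewrite ler_nat ltnW.
by rewrite natr1.
Qed.

Lemma hstepE (R : realType) (G : Type) n (g : 'I_n.+1 -> G) (x : R) :
  @hstep R G n g x = g (inord (idx n x)).
Proof. by []. Qed.
Lemma close_aux (R : realType) (x a d M k : R) : 0 < d -> 0 < M -> d^-1 < M ->
  k <= x * M <= k + 1 -> k <= a * M <= k + 1 -> `|x - a| < d.
Proof.
move=> d0 M0 dM /andP[x1 x2] /andP[a1 a2].
have dD : d * d^-1 = 1 by rewrite mulfV // gt_eqF.
have : 1 < d * M.
  by rewrite -dD ltr_pM2l.
move: dD; set D := d^-1 => dD h.
rewrite ltr_norml; apply/andP; split; nra.
Qed.

Lemma close_idx (R : realType) (x a d : R) (n : nat) (k : R) : 0 < d -> d^-1 < n.+1%:R ->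
  k <= x *+ n.+1 <= k + 1 -> k <= a *+ n.+1 <= k + 1 -> `|x - a| < d.
Proof.
move=> d0 dM; rewrite -(mulr_natr x) -(mulr_natr a).
apply: close_aux => //; exact: ltr0Sn.
Qed.

Lemma within_near (R : realType) (G : topologicalType) (f : R -> G) (A : set R) x (P : set G) :
  {within A, continuous f} -> A x -> nbhs (f x) P ->
  \forall y \near x, A y -> P (f y).
Proof.
move=> /subspace_continuousP cf Ax Px.
exact: (cf x Ax P Px).
Qed.

Lemma unif_cont (R : realType) (G : topologicalType) (f : R -> G) (A : set R)
  (U : set G) (phi : G -> G -> G) :
  compact A -> {within A, continuous f} ->
  (forall p : G, exists2 N, nbhs p N & forall a b, N a -> N b -> U (phi a b)) ->
  exists2 d : R, 0 < d & forall y z, A y -> A z -> `|y - z| < d -> U (phi (f y) (f z)).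
Proof.
move=> cA cf hU.
have H : \forall d \near (0:R)^'+, A `<=`
   (fun y => A y -> forall z, A z -> `|y - z| < d -> U (phi (f y) (f z))).
  apply: (compact_near_coveringP A).1 => // x Ax.
  have [N Nx HN] := hU (f x).
  have := within_near cf Ax Nx.
  case/nbhs_ballP => r r0 Hr.
  exists (ball x (r/2) : set R, [set d : R | d < r/2]) => /=.
    split; first by apply: nbhsx_ballx; rewrite divr_gt0.
    by apply: nbhs_right_lt; rewrite divr_gt0.
  case=> y d /= [yb dlt] Ay z Az yz.
  have r2 : r / 2 + r / 2 = r by rewrite -splitr.
  move: yb; rewrite /ball /= => yb.
  have xz : `|x - z| < r.
    apply: (le_lt_trans (ler_distD y x z)); rewrite -r2.
    by apply: ltrD => //; apply: lt_trans dlt.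
  apply: HN; apply: Hr => //; rewrite /ball /=.
    by apply: lt_trans yb _; rewrite ltr_pdivrMr // ltr_pMr // ltr1n.

have [d /= [d0 Hd]] := filter_ex (filterI (nbhs_right_gt (0:R)) H).
by exists d => // y z Ay Az; apply: (Hd y Ay Ay z Az).
Qed.

Lemma part2 (R : realType) (G : topologicalType)
  (mul : G -> G -> G) (inv : G -> G) (e : G) :
  topological_group mul inv e ->
  forall f : R -> G, strongly_measurable f ->
     in_L0_closure mul inv e (@step_maps R G) f.
Proof.
case=> _ _ Hinv cmul cinv f sf U oU Ue eps eps0.
have phiU : forall p : G, exists2 N, nbhs p N & forall a b, N a -> N b -> U (mul (inv a) b).
  move=> p.
  have cphi : continuous (fun q : G * G => mul (inv q.1) q.2).
    move=> q.
    apply: (continuous_comp (f := fun q : G * G => (inv q.1, q.2)) (g := fun q => mul q.1 q.2)).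
      apply: cvg_pair; last exact: cvg_snd.
      apply: continuous_comp; [exact: cvg_fst | exact: cinv].
    exact: cmul.
  have := cphi (p, p); rewrite /continuous_at /= Hinv => /(_ U (open_nbhs_nbhs (conj oU Ue))).
  case=> [[N1 N2]] /= [N1p N2p] sub.
  exists (N1 `&` N2); first exact: filterI.
  by move=> a b [? ?] [? ?]; exact: (sub (a, b)).
have e20 : 0 < eps / 2 by rewrite divr_gt0.
have [A [cA AI mA fA]] := sf _ e20.
have cptA : compact A by apply: (subclosed_compact cA _ AI); exact: segment_compact.
have [d d0 Hd] := unif_cont cptA fA phiU.
set n := Num.truncn d^-1.
pose g := fun i : 'I_n.+1 => f (xget 0 [set a | A a /\ idx n a = (i : nat)]).
exists (@hstep R G n g); split; first by exists n, g.
exists (@I01 R `\` A); split.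
- apply: measurableD; [exact: measurable_itv | exact: closed_measurable].
- move=> x [Ix nU]; split => // Ax; apply: nU.
  rewrite hstepE /g inordK ?ltnS ?idx_le //.
  set a := xget _ _.
  have [Aa ia] := @xgetPex _ 0 [set a | A a /\ idx n a = idx n x] (ex_intro _ x (conj Ax erefl)).
  rewrite -/a in Aa ia; apply: (Hd x a Ax Aa).
  have := AI _ Aa; have := Ix; rewrite /I01 /= !in_itv /= => xI aI.
  have := idx_bounds n xI; have := idx_bounds n aI; rewrite ia => ha hx.
  have dinv : 0 <= d^-1 by rewrite invr_ge0 ltW.
  have := truncn_itv dinv; rewrite -/n => /andP[_ nD].
  exact: (@close_idx R x a d n _ d0 nD hx ha).
- apply: le_lt_trans mA _; rewrite lte_fin; lra.
Qed.

Lemma near_aux (R : realType) (x y r N kk : R) : 0 < N ->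
  r <= `|kk / N - x| -> r <= `|(kk + 1) / N - x| -> kk <= x * N <= kk + 1 ->
  `|x - y| < r -> kk <= y * N < kk + 1.
Proof.
move=> N0 h1 h2 /andP[x1 x2] xy.
set a := kk / N in h1; set b := (kk + 1) / N in h2.
have aN : a * N = kk by rewrite /a mulfVK // gt_eqF.
have bN : b * N = kk + 1 by rewrite /b mulfVK // gt_eqF.
have ax : a <= x by rewrite -(ler_pM2r N0) aN.
have xb : x <= b by rewrite -(ler_pM2r N0) bN.
rewrite ler0_norm in h1; last by rewrite subr_le0.
rewrite ger0_norm in h2; last by rewrite subr_ge0.
move: xy; rewrite ltr_norml => /andP[y1 y2].
have ay : a < y by lra.
have yb : y < b by lra.
rewrite -bN -aN (ltr_pM2r N0) yb andbT ler_pM2r //; exact: ltW.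
Qed.

Lemma idx_eq (R : realType) n (y : R) (k : nat) :
  k%:R <= y *+ n.+1 < k.+1%:R -> (k <= n)%N -> idx n y = k.
Proof.
move=> /truncn_def h kn; rewrite /idx h; exact: minn_idPl.
Qed.

Lemma part1 (R : realType) (G : topologicalType) n (g : 'I_n.+1 -> G) :
  strongly_measurable (@hstep R G n g).
Proof.
move=> eps eps0.
pose N : R := n.+1%:R.
have N0 : 0 < N by rewrite ltr0Sn.
pose r := eps / (2 * n.+2%:R).
have r0 : 0 < r by rewrite divr_gt0 // mulr_gt0 // ltr0Sn.
pose O := \bigcup_(i < n.+2) ball (i%:R / N) r.
have oO : open O by apply: bigcup_open => i _; exact: ball_open.
exists (@I01 R `&` ~` O); split.
- apply: closedI; last exact: open_closedC.
  exact: interval_closed.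
- exact: subIsetl.
- have mO : measurable O by exact: open_measurable.
  apply: (@le_trans _ _ (\sum_(k < n.+2) lebesgue_measure (ball (k%:R / N) r))).
    apply: (@content_subadditive _ _ _ (@lebesgue_measure R) _ (fun k : nat => ball (k%:R / N) r) n.+2).
    - by move=> k _; apply: open_measurable; exact: ball_open.
    - apply: measurableD; first exact: measurable_itv.
      apply: measurableI; first exact: measurable_itv.
      exact: measurableC.
    - move=> x [Ix H]; rewrite -(bigcup_mkord n.+2 (fun k : nat => ball (k%:R / N) r)); apply: contrapT => nOx.
      apply: H; split; [exact: Ix | exact: nOx].
  under eq_bigr do rewrite lebesgue_measure_ball ?(ltW r0) //.
  rewrite sumEFin sumr_const card_ord lee_fin.
  rewrite -mulrnA -mulr_natr natrM /r divfK // gt_eqF // mulr_gt0 // ltr0Sn.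
- apply: continuous_in_subspaceT => x /set_mem [Ix nO].
  apply: (near_cst_continuous (@hstep R G n g x)).
  have xI : 0 <= x <= 1 by move: Ix; rewrite /I01 /= in_itv.
  have := idx_bounds n xI; rewrite -[x *+ _]mulr_natr => hx.
  have kn := idx_le n x.
  set k := idx n x in hx kn *.
  have nb (i : nat) : (i < n.+2)%N -> ~ ball (i%:R / N) r x.
    by move=> ilt bx; apply: nO; exists i.
  have h1 : r <= `|k%:R / N - x|.
    by rewrite leNgt; apply/negP; apply: nb; rewrite ltnS (leq_trans kn).
  have h2 : r <= `|k.+1%:R / N - x|.
    by rewrite leNgt; apply/negP; apply: nb; rewrite !ltnS.
  rewrite -natr1 in h2.
  apply/nbhs_ballP; exists r => // y yb.
  rewrite /= !hstepE (@idx_eq R n y k) //.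
  rewrite -[y *+ _]mulr_natr -[k.+1%:R]natr1.
  exact: (near_aux N0 h1 h2 hx yb).
Qed.

Unset Implicit Arguments. Set Strict Implicit.

Theorem corollary4p2 (R : realType) (G : topologicalType)
  (mul : G -> G -> G) (inv : G -> G) (e : G) :
  topological_group mul inv e ->
  (forall s : R -> G, @step_maps R G s -> strongly_measurable s) /\
  (forall f : R -> G, strongly_measurable f ->
     in_L0_closure mul inv e (@step_maps R G) f).
Proof.
move=> tg; split; last exact: part2.
by move=> s [n [g ->]]; exact: part1.
Qed.
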